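(* Let $\kappa$ be an infinite cardinal and $B_0=\{(X,\,X\cap Z,\,Z): X,Z\in\mathcal{F}(\kappa),\ X\sim Z\}$. Every complemented bounded sublattice $L$ of $S$ with $B_0\subsetneq L$ contains an element $(A,B,C)$ with $B\not\subseteq A$.
   Context: $\mathcal{F}(\kappa)$ is the Boolean lattice of subsets $X\subseteq\kappa$ that are finite or cofinite. For $X,Z\in\mathcal{F}(\kappa)$, $X\sim Z$ means that either both $X,Z$ are finite or both $\kappa\setminus X,\kappa\setminus Z$ are finite. Let $\mu(A,B,C)=(A\cap B)\cup(A\cap C)\cup(B\cap C)$; a triple is balanced if $A\cap B=A\cap C=B\cap C$. $S$ is the set of balanced triples $(A,B,C)\in\mathcal{F}(\kappa)^3$ with $C\setminus\mu(A,B,C)$ finite, ordered componentwise; it is a bounded lattice with componentwise meet, join $(A,B,C)\vee(A',B',C')=(U_1\cup m,U_2\cup m,U_3\cup m)$ where $U_1=A\cup A'$, $U_2=B\cup B'$, $U_3=C\cup C'$, $m=\mu(U_1,U_2,U_3)$, and bounds $(\emptyset,\emptyset,\emptyset)$, $(\kappa,\kappa,\kappa)$. A complemented bounded sublattice is a sublattice containing both bounds in which every element has a complement. (In the paper the set $B_0$ is called $B$.) *)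

(* Defs.v *)
(* MathComp-Analysis classical world: subsets of an infinite type T model
   subsets of the infinite cardinal kappa = |T|. *)
From HB Require Import structures.
From mathcomp Require Import all_boot.
From mathcomp Require Import boolp classical_sets cardinality.
Set Implicit Arguments. Unset Strict Implicit. Unset Printing Implicit Defensive.
Local Open Scope classical_set_scope.

Section Defs.
Variable T : Type.

Definition finco (X : set T) : Prop := finite_set X \/ finite_set (~` X).

Definition simF (X Z : set T) : Prop :=
  (finite_set X /\ finite_set Z) \/ (finite_set (~` X) /\ finite_set (~` Z)).

Definition mu (A B C : set T) : set T := (A `&` B) `|` (A `&` C) `|` (B `&` C).

Record triple := Triple { t1 : set T; t2 : set T; t3 : set T }.

Definition balanced (t : triple) : Prop :=
  t1 t `&` t2 t = t1 t `&` t3 t /\ t1 t `&` t3 t = t2 t `&` t3 t.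

Definition Sset : set triple :=
  [set t | [/\ finco (t1 t), finco (t2 t), finco (t3 t), balanced t &
             finite_set (t3 t `\` mu (t1 t) (t2 t) (t3 t))]].

Definition tmeet (s t : triple) : triple :=
  Triple (t1 s `&` t1 t) (t2 s `&` t2 t) (t3 s `&` t3 t).

Definition tjoin (s t : triple) : triple :=
  let U1 := t1 s `|` t1 t in
  let U2 := t2 s `|` t2 t in
  let U3 := t3 s `|` t3 t in
  let m := mu U1 U2 U3 in
  Triple (U1 `|` m) (U2 `|` m) (U3 `|` m).

Definition tbot : triple := Triple set0 set0 set0.
Definition ttop : triple := Triple setT setT setT.

Definition complemented_bounded_sublattice (L : set triple) : Prop :=
  [/\ L `<=` Sset, L tbot /\ L ttop,
      (forall s t, L s -> L t -> L (tmeet s t)),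
      (forall s t, L s -> L t -> L (tjoin s t)) &
      (forall s, L s -> exists t, [/\ L t, tmeet s t = tbot & tjoin s t = ttop])].

Definition B0 : set triple :=
  [set t | exists X Z, [/\ finco X, finco Z, simF X Z & t = Triple X (X `&` Z) Z]].

End Defs.

(* Main.v *)
Require Import Defs.
From mathcomp Require Import all_boot.
From mathcomp Require Import boolp classical_sets cardinality.
Local Open Scope classical_set_scope.

Lemma fin_union {T} {A B : set T} : finite_set A -> finite_set B -> finite_set (A `|` B).
Proof. by move=> hA hB; rewrite finite_setU. Qed.

Theorem corollary5p5 (T : Type) (Tinf : infinite_set (@setT T))
  (L : set (triple T)) :
  complemented_bounded_sublattice L ->
  @B0 T `<=` L -> @B0 T <> L ->
  exists2 t, L t & ~ (t2 t `<=` t1 t).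
Proof.
move=> [LS [Lbot Ltop] Lmeet Ljoin Lcomp] BL BneL.
case: (pselect (exists2 t, L t & ~ (t2 t `<=` t1 t))) => // Hno.
have H21 : forall t, L t -> t2 t `<=` t1 t.
  move=> t Lt; apply: contrapT => N; apply: Hno; by exists t.
have Heq : forall t, L t -> t2 t = t1 t `&` t3 t.
  move=> t Lt; have [_ _ _ [b1 b2] _] := LS t Lt.
  rewrite -b1; apply/seteqP; split=> x /=.
    by move=> h; split=> //; exact: H21.
  by case.
have H23 : forall t, L t -> t2 t `<=` t3 t.
  by move=> t Lt x; rewrite (Heq t Lt) => -[].
have [t [Lt nB]] : exists t, L t /\ ~ B0 t.
  apply: contrapT => N; apply: BneL; apply/seteqP; split=> // t Lt.
  apply: contrapT => nb; apply: N; by exists t.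
have [fA fB fC [b1 b2] fD] := LS t Lt.
have muA : t3 t `\` t1 t `<=` t3 t `\` mu (t1 t) (t2 t) (t3 t).
  move=> x [h3 n1]; split=> // -[[[h1 _]|[h1 _]]|[h2 _]] //.
  by apply: n1; apply: (H21 _ Lt).
have fCA : finite_set (t3 t `\` t1 t) := sub_finite_set muA fD.
have tE : t = Triple (t1 t) (t1 t `&` t3 t) (t3 t).
  by rewrite -(Heq t Lt); case: (t).
have cofA : finite_set (~` t1 t).
  have := fA; case => // finA; exfalso; apply: nB.
  exists (t1 t), (t3 t); split => //; left; split; first exact: finA.
  apply: (sub_finite_set _ (fin_union fCA finA)).
  by move=> x h; case: (pselect (t1 t x)) => h1; [right|left].
have finC : finite_set (t3 t).
  have := fC; case => // cofC; exfalso; apply: nB.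
  by exists (t1 t), (t3 t); split => //; right.
have [t' [Lt' mE jE]] := Lcomp t Lt.
have [fA' fB' fC' _ fD'] := LS t' Lt'.
have finA' : finite_set (t1 t').
  apply: (sub_finite_set _ cofA) => x h1 h.
  have : t1 (tmeet t t') x by split.
  by rewrite mE.
have muA' : t3 t' `\` t1 t' `<=` t3 t' `\` mu (t1 t') (t2 t') (t3 t').
  move=> x [h3 n1]; split=> // -[[[h1 _]|[h1 _]]|[h2 _]] //.
  by apply: n1; apply: (H21 _ Lt').
have finC' : finite_set (t3 t').
  apply: (sub_finite_set _ (fin_union (sub_finite_set muA' fD') finA')).
  by move=> x h; case: (pselect (t1 t' x)) => h1; [right|left].
exfalso; apply: Tinf; apply: (sub_finite_set _ (fin_union finC finC')).
move=> x _.
have : t3 (tjoin t t') x by rewrite jE.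
rewrite /tjoin /= /mu.
have h2 : forall y, (t2 t `|` t2 t') y -> (t3 t `|` t3 t') y.
  by move=> y [h|h]; [left; exact: H23 Lt _ h|right; exact: H23 Lt' _ h].
move=> [h|[[[_ h]|[_ h]]|[h _]]] //; exact: h2.
Qed.
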